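(* Let $\xi$ be a vector field and $\varphi$ a function on a spacetime $(M,g)$, and suppose a null tetrad is preferred relative to $\xi$. Then the tetrad is Lie recurrent relative to $\xi$ with associated factor $\varphi$ if and only if $\xi$ is a (C)KV with conformal factor $\varphi$.
   Context: $(M,g)$ is a 4-dimensional Lorentzian manifold; $\pounds$ is the ordinary Lie derivative. $\xi$ is a (C)KV with conformal factor $\varphi$ if $\pounds_\xi g_{\mu\nu}=\varphi g_{\mu\nu}$. A null tetrad $(l,n,m,\overline m)$: $l,n$ real null, $m$ complex null, $l_\mu n^\mu=1$, $m_\mu\overline m^\mu=-1$, other inner products zero. It is Lie recurrent relative to $\xi$ with associated factor $\varphi$ if $\pounds_\xi l^\mu=-\frac12\varphi l^\mu$, $\pounds_\xi n^\mu=-\frac12\varphi n^\mu$, $\pounds_\xi m^\mu=-\frac12\varphi m^\mu$. Null directions are preferred relative to $\xi$ if $\overline m_\mu\pounds_\xi l^\mu=l_\mu\pounds_\xi\overline m^\mu$ and $m_\mu\pounds_\xi n^\mu=n_\mu\pounds_\xi m^\mu$. A quantity $\eta$ has GHP weight $(p,q)$ if under $l\to A^2l$, $n\to A^{-2}n$, $m\to e^{i\alpha_0}m$ it becomes $\lambda^p\overline\lambda^q\eta$, $\lambda=Ae^{i\alpha_0/2}$; GHP Lie derivative $\text{\L}_\xi\eta=\pounds_\xi\eta+\frac{p+q}{4}(l_\mu\pounds_\xi n^\mu-n_\mu\pounds_\xi l^\mu)\eta+\frac{p-q}{4}(\overline m_\mu\pounds_\xi m^\mu-m_\mu\pounds_\xi\overline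 m^\mu)\eta$. The gauge is preferred relative to $\xi$ if $\text{\L}_\xi\eta=\pounds_\xi\eta$ for every quantity $\eta$. A tetrad is preferred relative to $\xi$ if its null directions and its gauge are both preferred. *)

(* Defs.v *)
(* Local (coordinate-chart) formalization of
   Lie derivatives of a metric, vector fields and scalars on an open
   subset U of R^4.  Indices mu, nu range over 0..3. *)
From Stdlib Require Import Reals ZArith.
From Coquelicot Require Import Coquelicot.

Set Implicit Arguments.

Open Scope R_scope.

Definition Point := (R * R * R * R)%type.

Definition coord (x : Point) (mu : nat) : R :=
  match x with (x0, x1, x2, x3) =>
    match mu with 0 => x0 | 1 => x1 | 2 => x2 | _ => x3 end end.

Definition shift (x : Point) (mu : nat) (t : R) : Point :=
  match x with (x0, x1, x2, x3) =>
    match mu with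
    | 0 => (x0 + t, x1, x2, x3)
    | 1 => (x0, x1 + t, x2, x3)
    | 2 => (x0, x1, x2 + t, x3)
    | _ => (x0, x1, x2, x3 + t)
    end end.

Definition open4 (U : Point -> Prop) : Prop :=
  forall x, U x -> exists eps : R, 0 < eps /\
    forall y, (forall mu, (mu < 4)%nat -> Rabs (coord y mu - coord x mu) < eps) -> U y.

Definition pd (f : Point -> R) (mu : nat) (x : Point) : R :=
  Derive (fun t => f (shift x mu t)) 0.

Definition has_pd (f : Point -> R) (x : Point) : Prop :=
  forall mu, (mu < 4)%nat -> ex_derive (fun t => f (shift x mu t)) 0.

Definition pdC (f : Point -> C) (mu : nat) (x : Point) : C :=
  (pd (fun y => Re (f y)) mu x, pd (fun y => Im (f y)) mu x).

Definition sum4 (f : nat -> R) : R := f 0%nat + f 1%nat + f 2%nat + f 3%nat.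
Definition sum4C (f : nat -> C) : C :=
  (f 0%nat + f 1%nat + f 2%nat + f 3%nat)%C.

Definition VField := Point -> nat -> R.
Definition CVField := Point -> nat -> C.
Definition Metric := Point -> nat -> nat -> R.

Definition liftC (V : VField) : CVField := fun x mu => RtoC (V x mu).
Definition conjV (V : CVField) : CVField := fun x mu => Cconj (V x mu).

Definition LieS (xi : VField) (eta : Point -> C) (x : Point) : C :=
  sum4C (fun r => (RtoC (xi x r) * pdC eta r x)%C).

Definition LieV (xi : VField) (V : CVField) (x : Point) (mu : nat) : C :=
  sum4C (fun r => (RtoC (xi x r) * pdC (fun y => V y mu) r x
                   - V x r * RtoC (pd (fun y => xi y mu) r x))%C).

Definition LieG (xi : VField) (g : Metric) (x : Point) (mu nu : nat) : R :=
  sum4 (fun r => xi x r * pd (fun y => g y mu nu) r x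
               + g x r nu * pd (fun y => xi y r) mu x
               + g x mu r * pd (fun y => xi y r) nu x).

Definition gdot (g : Metric) (x : Point) (u v : nat -> C) : C :=
  sum4C (fun mu => sum4C (fun nu => (RtoC (g x mu nu) * u mu * v nu)%C)).

(** g is a symmetric metric on U (its Lorentzian signature is forced by the
    existence of the null tetrad). *)
Definition symmetric_metric (U : Point -> Prop) (g : Metric) : Prop :=
  forall x, U x -> forall mu nu, (mu < 4)%nat -> (nu < 4)%nat ->
    g x mu nu = g x nu mu.

Definition regular_data (U : Point -> Prop) (xi : VField) (g : Metric)
  (l n : VField) (m : CVField) : Prop :=
  forall x, U x -> forall mu, (mu < 4)%nat ->
    has_pd (fun y => xi y mu) x /\ has_pd (fun y => l y mu) x /\
    has_pd (fun y => n y mu) x /\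
    has_pd (fun y => Re (m y mu)) x /\ has_pd (fun y => Im (m y mu)) x /\
    (forall nu, (nu < 4)%nat -> has_pd (fun y => g y mu nu) x).

Definition null_tetrad (U : Point -> Prop) (g : Metric)
  (l n : VField) (m : CVField) : Prop :=
  forall x, U x ->
    let L := liftC l x in let N := liftC n x in
    let Mv := m x in let Mb := conjV m x in
    gdot g x L L = RtoC 0 /\ gdot g x N N = RtoC 0 /\
    gdot g x Mv Mv = RtoC 0 /\ gdot g x Mb Mb = RtoC 0 /\
    gdot g x L N = RtoC 1 /\ gdot g x Mv Mb = RtoC (-1) /\
    gdot g x L Mv = RtoC 0 /\ gdot g x L Mb = RtoC 0 /\
    gdot g x N Mv = RtoC 0 /\ gdot g x N Mb = RtoC 0.

Definition conformal_killing (U : Point -> Prop) (g : Metric) (xi : VField)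
  (phi : Point -> R) : Prop :=
  forall x, U x -> forall mu nu, (mu < 4)%nat -> (nu < 4)%nat ->
    LieG xi g x mu nu = phi x * g x mu nu.

Definition lie_recurrent (U : Point -> Prop) (xi : VField) (phi : Point -> R)
  (l n : VField) (m : CVField) : Prop :=
  forall x, U x -> forall mu, (mu < 4)%nat ->
    LieV xi (liftC l) x mu = RtoC (- / 2 * phi x * l x mu) /\
    LieV xi (liftC n) x mu = RtoC (- / 2 * phi x * n x mu) /\
    LieV xi m x mu = (RtoC (- / 2 * phi x) * m x mu)%C.

Definition preferred_directions (U : Point -> Prop) (g : Metric) (xi : VField)
  (l n : VField) (m : CVField) : Prop :=
  forall x, U x ->
    gdot g x (conjV m x) (LieV xi (liftC l) x) =
      gdot g x (liftC l x) (LieV xi (conjV m) x) /\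
    gdot g x (m x) (LieV xi (liftC n) x) =
      gdot g x (liftC n x) (LieV xi m x).

Definition GHPLie (g : Metric) (xi : VField) (l n : VField) (m : CVField)
  (p q : Z) (eta : Point -> C) (x : Point) : C :=
  (LieS xi eta x
   + RtoC (IZR (p + q) / 4) *
       (gdot g x (liftC l x) (LieV xi (liftC n) x)
        - gdot g x (liftC n x) (LieV xi (liftC l) x)) * eta x
   + RtoC (IZR (p - q) / 4) *
       (gdot g x (conjV m x) (LieV xi m x)
        - gdot g x (m x) (LieV xi (conjV m) x)) * eta x)%C.

Definition preferred_gauge (U : Point -> Prop) (g : Metric) (xi : VField)
  (l n : VField) (m : CVField) : Prop :=
  forall (p q : Z) (eta : Point -> C) x, U x ->
    GHPLie g xi l n m p q eta x = LieS xi eta x.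

Definition preferred_tetrad (U : Point -> Prop) (g : Metric) (xi : VField)
  (l n : VField) (m : CVField) : Prop :=
  preferred_directions U g xi l n m /\ preferred_gauge U g xi l n m.

(* Main.v *)
Require Import Defs.
From Stdlib Require Import Reals ZArith.
From Coquelicot Require Import Coquelicot.
From Stdlib Require Import Lia Lra FunctionalExtensionality.
Require Import Defs.

Definition delta (i j : nat) : R := if Nat.eqb i j then R1 else R0.
Module LRInv.
From mathcomp Require Import all_boot all_algebra.
From mathcomp Require Import Rstruct.
Import GRing.Theory.
Local Open Scope ring_scope.
Lemma lr (A B : nat -> nat -> R) :
  (forall i j, (i < 4)%N -> (j < 4)%N -> Defs.sum4 (fun k => Rmult (A i k) (B k j)) = if i == j then R1 else R0) ->
  (forall i j, (i < 4)%N -> (j < 4)%N -> Defs.sum4 (fun k => Rmult (B i k) (A k j)) = if i == j then R1 else R0).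
Proof.
move=> H.
pose MA := \matrix_(i < 4, j < 4) A i j.
pose MB := \matrix_(i < 4, j < 4) B i j.
have E : forall (X Y : nat -> nat -> R) (i j : 'I_4), ((\matrix_(i < 4, j < 4) X i j) *m (\matrix_(i < 4, j < 4) Y i j)) i j = Defs.sum4 (fun k => Rmult (X i k) (Y k j)).
  move=> X Y i j; rewrite !mxE !big_ord_recr big_ord0 /= !mxE /Defs.sum4 /=.
  by rewrite GRing.add0r.
have HAB : MA *m MB = 1%:M.
  apply/matrixP => i j; rewrite E H // mxE.
  have eqij : (nat_of_ord i == nat_of_ord j) = (i == j) by []. rewrite eqij. by case: (i == j).
have HBA := mulmx1C HAB.
move=> i j hi hj.
have := congr1 (fun M : 'M[R]_4 => M (Ordinal hi) (Ordinal hj)) HBA.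
rewrite /= /MB /MA E mxE /=.
have eqij : (i == j) = (Ordinal hi == Ordinal hj) by []. rewrite eqij. by case: (_ == _).
Qed.

Lemma lr_std (A B : nat -> nat -> R) :
  (forall i j, (i < 4)%coq_nat -> (j < 4)%coq_nat -> Defs.sum4 (fun k => Rmult (A i k) (B k j)) = delta i j) ->
  (forall i j, (i < 4)%coq_nat -> (j < 4)%coq_nat -> Defs.sum4 (fun k => Rmult (B i k) (A k j)) = delta i j).
Proof.
move=> H i j /ltP hi /ltP hj. rewrite /delta.
have E : forall a b : nat, Nat.eqb a b = (a == b).
  move=> a b; case: (Nat.eqb_spec a b) => [->|hne]; first by rewrite eqxx.
  by apply/esym/eqP.
rewrite E. apply: (lr A B) => //.
move=> a b ha hb. rewrite -E. have := H a b. rewrite /delta. apply; exact/ltP.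
Qed.
End LRInv.

Definition goodC (eta : Point -> C) (x : Point) : Prop :=
  has_pd (fun y => Re (eta y)) x /\ has_pd (fun y => Im (eta y)) x.

Lemma pd_ext f h r x : (forall y, f y = h y) -> pd f r x = pd h r x.
Proof. intros H. unfold pd. apply Derive_ext. intros; apply H. Qed.

Lemma pd_plus f h r x : ex_derive (fun t => f (shift x r t)) 0 ->
  ex_derive (fun t => h (shift x r t)) 0 ->
  pd (fun y => f y + h y) r x = pd f r x + pd h r x.
Proof. intros. unfold pd. apply (Derive_plus (fun t => f (shift x r t)) (fun t => h (shift x r t))); auto. Qed.

Lemma pd_minus f h r x : ex_derive (fun t => f (shift x r t)) 0 ->
  ex_derive (fun t => h (shift x r t)) 0 ->
  pd (fun y => f y - h y) r x = pd f r x - pd h r x.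
Proof. intros. unfold pd. apply (Derive_minus (fun t => f (shift x r t)) (fun t => h (shift x r t))); auto. Qed.

Lemma pd_mult f h r x : ex_derive (fun t => f (shift x r t)) 0 ->
  ex_derive (fun t => h (shift x r t)) 0 ->
  pd (fun y => f y * h y) r x = pd f r x * h x + f x * pd h r x.
Proof. intros. unfold pd. rewrite (Derive_mult (fun t => f (shift x r t)) (fun t => h (shift x r t))); auto.
  assert (E : forall y, shift y r 0 = y).
  { intros [[[a b] c] d]. destruct r as [|[|[|r]]]; simpl; f_equal; try f_equal; try f_equal; ring. }
  rewrite E. reflexivity. Qed.

Lemma pd_opp f r x : pd (fun y => - f y) r x = - pd f r x.
Proof. unfold pd. apply (Derive_opp (fun t => f (shift x r t))). Qed.

Lemma pd_const c r x : pd (fun _ => c) r x = 0.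
Proof. unfold pd. apply Derive_const. Qed.

Lemma exd_plus f h x r : ex_derive (fun t => f (shift x r t)) 0 ->
  ex_derive (fun t => h (shift x r t)) 0 -> ex_derive (fun t => f (shift x r t) + h (shift x r t)) 0.
Proof. intros. apply (ex_derive_plus (fun t => f (shift x r t)) (fun t => h (shift x r t))); auto. Qed.

Lemma exd_minus f h x r : ex_derive (fun t => f (shift x r t)) 0 ->
  ex_derive (fun t => h (shift x r t)) 0 -> ex_derive (fun t => f (shift x r t) - h (shift x r t)) 0.
Proof. intros. apply (ex_derive_minus (fun t => f (shift x r t)) (fun t => h (shift x r t))); auto. Qed.

Lemma exd_mult f h x r : ex_derive (fun t => f (shift x r t)) 0 ->
  ex_derive (fun t => h (shift x r t)) 0 -> ex_derive (fun t => f (shift x r t) * h (shift x r t)) 0.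
Proof. intros. apply (ex_derive_mult (fun t => f (shift x r t)) (fun t => h (shift x r t))); auto. Qed.

Lemma exd_opp f x r : ex_derive (fun t => f (shift x r t)) 0 -> ex_derive (fun t => - f (shift x r t)) 0.
Proof. intros. apply (ex_derive_opp (fun t => f (shift x r t))); auto. Qed.

Lemma exd_const (c : R) (x : Point) r : ex_derive (fun t => (fun _ : Point => c) (shift x r t)) 0.
Proof. apply (ex_derive_const c). Qed.
Lemma hp_plus f h x : has_pd f x -> has_pd h x -> has_pd (fun y => f y + h y) x.
Proof. intros A B mu Hm. apply (exd_plus f h); auto. Qed.
Lemma hp_minus f h x : has_pd f x -> has_pd h x -> has_pd (fun y => f y - h y) x.
Proof. intros A B mu Hm. apply (exd_minus f h); auto. Qed.
Lemma hp_mult f h x : has_pd f x -> has_pd h x -> has_pd (fun y => f y * h y) x.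
Proof. intros A B mu Hm. apply (exd_mult f h); auto. Qed.
Lemma hp_opp f x : has_pd f x -> has_pd (fun y => - f y) x.
Proof. intros A mu Hm. apply (exd_opp f); auto. Qed.
Lemma hp_const c x : has_pd (fun _ => c) x.
Proof. intros mu Hm. apply (exd_const c x mu). Qed.

Lemma gC_plus e1 e2 x : goodC e1 x -> goodC e2 x -> goodC (fun y => (e1 y + e2 y)%C) x.
Proof. intros [A B] [C1 D]. split.
  exact (hp_plus (fun y => Re (e1 y)) (fun y => Re (e2 y)) x A C1).
  exact (hp_plus (fun y => Im (e1 y)) (fun y => Im (e2 y)) x B D). Qed.
Lemma gC_mult e1 e2 x : goodC e1 x -> goodC e2 x -> goodC (fun y => (e1 y * e2 y)%C) x.
Proof. intros [A B] [C1 D]. split.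
  exact (hp_minus (fun y => Re (e1 y) * Re (e2 y)) (fun y => Im (e1 y) * Im (e2 y)) x
     (hp_mult _ _ x A C1) (hp_mult _ _ x B D)).
  exact (hp_plus (fun y => Re (e1 y) * Im (e2 y)) (fun y => Im (e1 y) * Re (e2 y)) x
     (hp_mult _ _ x A D) (hp_mult _ _ x B C1)). Qed.
Lemma gC_RtoC f x : has_pd f x -> goodC (fun y => RtoC (f y)) x.
Proof. intros A. split. exact A. exact (hp_const 0 x). Qed.
Lemma gC_const c x : goodC (fun _ => c) x.
Proof. split; apply hp_const. Qed.
Lemma gC_conj e x : goodC e x -> goodC (fun y => Cconj (e y)) x.
Proof. intros [A B]. split. exact A. exact (hp_opp _ x B). Qed.
Lemma gC_sum4C (F : Point -> nat -> C) x : (forall mu, (mu < 4)%nat -> goodC (fun y => F y mu) x) ->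
  goodC (fun y => sum4C (F y)) x.
Proof. intros H. unfold sum4C.
  apply gC_plus; [apply gC_plus; [apply gC_plus|]|]; apply H; lia. Qed.
Lemma pdC_plus e1 e2 r x : (r < 4)%nat -> goodC e1 x -> goodC e2 x ->
  pdC (fun y => (e1 y + e2 y)%C) r x = (pdC e1 r x + pdC e2 r x)%C.
Proof. intros Hr [A B] [C1 D]. unfold pdC.
  rewrite (pd_ext (fun y => Re (e1 y + e2 y)%C) (fun y => Re (e1 y) + Re (e2 y))) by reflexivity.
  rewrite (pd_ext (fun y => Im (e1 y + e2 y)%C) (fun y => Im (e1 y) + Im (e2 y))) by reflexivity.
  rewrite (pd_plus (fun y => Re (e1 y)) (fun y => Re (e2 y))) by auto.
  rewrite (pd_plus (fun y => Im (e1 y)) (fun y => Im (e2 y))) by auto.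
  reflexivity. Qed.

Lemma pdC_mult e1 e2 r x : (r < 4)%nat -> goodC e1 x -> goodC e2 x ->
  pdC (fun y => (e1 y * e2 y)%C) r x = (pdC e1 r x * e2 x + e1 x * pdC e2 r x)%C.
Proof. intros Hr [A B] [C1 D]. unfold pdC.
  specialize (A r Hr); specialize (B r Hr); specialize (C1 r Hr); specialize (D r Hr).
  rewrite (pd_ext (fun y => Re (e1 y * e2 y)%C) (fun y => Re (e1 y) * Re (e2 y) - Im (e1 y) * Im (e2 y))) by reflexivity.
  rewrite (pd_ext (fun y => Im (e1 y * e2 y)%C) (fun y => Re (e1 y) * Im (e2 y) + Im (e1 y) * Re (e2 y))) by reflexivity.
  rewrite (pd_minus (fun y => Re (e1 y) * Re (e2 y)) (fun y => Im (e1 y) * Im (e2 y)))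
    by (exact (exd_mult _ _ x r A C1) || exact (exd_mult _ _ x r B D)).
  rewrite (pd_plus (fun y => Re (e1 y) * Im (e2 y)) (fun y => Im (e1 y) * Re (e2 y)))
    by (exact (exd_mult _ _ x r A D) || exact (exd_mult _ _ x r B C1)).
  rewrite (pd_mult (fun y => Re (e1 y)) (fun y => Re (e2 y))) by assumption.
  rewrite (pd_mult (fun y => Im (e1 y)) (fun y => Im (e2 y))) by assumption.
  rewrite (pd_mult (fun y => Re (e1 y)) (fun y => Im (e2 y))) by assumption.
  rewrite (pd_mult (fun y => Im (e1 y)) (fun y => Re (e2 y))) by assumption.
  destruct (e1 x) as [a b]; destruct (e2 x) as [c d].
  apply injective_projections; cbn [fst snd Re Im Cplus Cmult]; ring. Qed.

Lemma pdC_RtoC f r x : pdC (fun y => RtoC (f y)) r x = RtoC (pd f r x).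
Proof. unfold pdC. change (fun y => Im (RtoC (f y))) with (fun _ : Point => 0).
  rewrite pd_const. reflexivity. Qed.

Lemma pdC_const c r x : pdC (fun _ => c) r x = RtoC 0.
Proof. unfold pdC. rewrite !pd_const. reflexivity. Qed.

Lemma pdC_conj e r x : pdC (fun y => Cconj (e y)) r x = Cconj (pdC e r x).
Proof. unfold pdC.
  change (fun y => Im (Cconj (e y))) with (fun y => - Im (e y)).
  rewrite pd_opp. reflexivity. Qed.

Lemma sum4C_ext f h : (forall mu, (mu < 4)%nat -> f mu = h mu) -> sum4C f = sum4C h.
Proof. intros H. unfold sum4C. rewrite (H 0%nat), (H 1%nat), (H 2%nat), (H 3%nat) by lia. reflexivity. Qed.

Lemma pdC_sum4C (F : Point -> nat -> C) r x : (r < 4)%nat ->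
  (forall mu, (mu < 4)%nat -> goodC (fun y => F y mu) x) ->
  pdC (fun y => sum4C (F y)) r x = sum4C (fun mu => pdC (fun y => F y mu) r x).
Proof. intros Hr H. unfold sum4C.
  assert (G0 := H 0%nat ltac:(lia)). assert (G1 := H 1%nat ltac:(lia)).
  assert (G2 := H 2%nat ltac:(lia)). assert (G3 := H 3%nat ltac:(lia)).
  rewrite pdC_plus; auto. rewrite pdC_plus; auto. rewrite pdC_plus; auto.
  apply gC_plus; auto. apply gC_plus; auto. apply gC_plus; auto. Qed.
Lemma pdC_gdot (g : Metric) (U V : CVField) r x : (r < 4)%nat ->
  (forall mu nu, (mu < 4)%nat -> (nu < 4)%nat -> has_pd (fun y => g y mu nu) x) ->
  (forall mu, (mu < 4)%nat -> goodC (fun y => U y mu) x) ->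
  (forall mu, (mu < 4)%nat -> goodC (fun y => V y mu) x) ->
  pdC (fun y => gdot g y (U y) (V y)) r x =
  sum4C (fun mu => sum4C (fun nu =>
    (RtoC (pd (fun y => g y mu nu) r x) * U x mu * V x nu
     + RtoC (g x mu nu) * pdC (fun y => U y mu) r x * V x nu
     + RtoC (g x mu nu) * U x mu * pdC (fun y => V y nu) r x)%C)).
Proof. intros Hr Hg HU HV. unfold gdot.
  rewrite (pdC_sum4C (fun y mu => sum4C (fun nu => (RtoC (g y mu nu) * U y mu * V y nu)%C))); auto.
  2:{ intros mu Hm. apply gC_sum4C. intros nu Hn. apply gC_mult; [apply gC_mult|]; auto. apply gC_RtoC; auto. }
  apply sum4C_ext. intros mu Hm.
  rewrite (pdC_sum4C (fun y nu => (RtoC (g y mu nu) * U y mu * V y nu)%C)); auto.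
  2:{ intros nu Hn. apply gC_mult; [apply gC_mult|]; auto. apply gC_RtoC; auto. }
  apply sum4C_ext. intros nu Hn.
  rewrite (pdC_mult (fun y => (RtoC (g y mu nu) * U y mu)%C) (fun y => V y nu)); auto.
  2:{ apply gC_mult; auto. apply gC_RtoC; auto. }
  rewrite (pdC_mult (fun y => RtoC (g y mu nu)) (fun y => U y mu)); auto.
  2:{ apply gC_RtoC; auto. }
  rewrite pdC_RtoC. ring. Qed.

Lemma abs_id (xi : nat -> C) (G : nat -> nat -> C) (dg : nat -> nat -> nat -> C)
  (u v : nat -> C) (du dv dxi : nat -> nat -> C) :
  sum4C (fun r => xi r * sum4C (fun mu => sum4C (fun nu =>
     dg r mu nu * u mu * v nu + G mu nu * du r mu * v nu + G mu nu * u mu * dv r nu)))%C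
  = (sum4C (fun mu => sum4C (fun nu =>
      sum4C (fun r => xi r * dg r mu nu + G r nu * dxi mu r + G mu r * dxi nu r) * u mu * v nu))
    + sum4C (fun mu => sum4C (fun nu => G mu nu * sum4C (fun r => xi r * du r mu - u r * dxi r mu) * v nu))
    + sum4C (fun mu => sum4C (fun nu => G mu nu * u mu * sum4C (fun r => xi r * dv r nu - v r * dxi r nu))))%C.
Proof. unfold sum4C. ring. Qed.

Lemma LieG_C (xi : VField) (g : Metric) x mu nu :
  RtoC (LieG xi g x mu nu) = sum4C (fun r => RtoC (xi x r) * RtoC (pd (fun y => g y mu nu) r x)
     + RtoC (g x r nu) * RtoC (pd (fun y => xi y r) mu x) + RtoC (g x mu r) * RtoC (pd (fun y => xi y r) nu x))%C.
Proof. unfold LieG, sum4, sum4C. repeat rewrite RtoC_plus. repeat rewrite RtoC_mult. reflexivity. Qed.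

Lemma lie_gdot (g : Metric) (xi : VField) (U V : CVField) x :
  (forall mu nu, (mu < 4)%nat -> (nu < 4)%nat -> has_pd (fun y => g y mu nu) x) ->
  (forall mu, (mu < 4)%nat -> goodC (fun y => U y mu) x) ->
  (forall mu, (mu < 4)%nat -> goodC (fun y => V y mu) x) ->
  LieS xi (fun y => gdot g y (U y) (V y)) x =
  (sum4C (fun mu => sum4C (fun nu => RtoC (LieG xi g x mu nu) * U x mu * V x nu))
   + gdot g x (LieV xi U x) (V x) + gdot g x (U x) (LieV xi V x))%C.
Proof. intros Hg HU HV. unfold LieS.
  rewrite (sum4C_ext _ (fun r => (RtoC (xi x r) * sum4C (fun mu => sum4C (fun nu =>
    (RtoC (pd (fun y => g y mu nu) r x) * U x mu * V x nu
     + RtoC (g x mu nu) * pdC (fun y => U y mu) r x * V x nu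
     + RtoC (g x mu nu) * U x mu * pdC (fun y => V y nu) r x)%C)))%C)).
  2:{ intros r Hr. rewrite pdC_gdot; auto. }
  etransitivity.
  { exact (abs_id (fun r => RtoC (xi x r)) (fun a b => RtoC (g x a b))
      (fun r a b => RtoC (pd (fun y => g y a b) r x)) (U x) (V x)
      (fun r a => pdC (fun y => U y a) r x) (fun r a => pdC (fun y => V y a) r x)
      (fun r a => RtoC (pd (fun y => xi y a) r x))). }
  f_equal. f_equal.
  apply sum4C_ext; intros mu _; apply sum4C_ext; intros nu _.
  rewrite LieG_C. reflexivity. Qed.

Lemma LieS_loc_const (U : Point -> Prop) xi (eta : Point -> C) c x :
  open4 U -> U x -> (forall y, U y -> eta y = c) -> LieS xi eta x = RtoC 0.
Proof.
  intros HO Ux Hc.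
  destruct (HO x Ux) as [eps [Heps Hball]].
  assert (P : forall r f, (forall y, U y -> f y = f x) -> pd f r x = 0).
  { intros r f Hf. unfold pd.
    rewrite (Derive_ext_loc _ (fun _ => f x)).
    - apply Derive_const.
    - exists (mkposreal eps Heps). intros t Ht. change R in t.
      change (Rabs (t - 0) < eps) in Ht. rewrite Rminus_0_r in Ht.
      apply Hf. apply Hball. intros mu Hmu.
      destruct x as [[[x0 x1] x2] x3].
      destruct r as [|[|[|r]]]; destruct mu as [|[|[|[|mu]]]]; try lia; simpl;
      ((replace (_ - _) with t by ring; exact Ht)
       || (replace (_ - _) with 0 by ring; rewrite Rabs_R0; exact Heps)). }
  assert (Q : forall r, pdC eta r x = RtoC 0).
  { intros r. unfold pdC. rewrite (P r (fun y => Re (eta y))), (P r (fun y => Im (eta y))).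
    reflexivity.
    intros y Uy; rewrite (Hc y Uy), (Hc x Ux); reflexivity.
    intros y Uy; rewrite (Hc y Uy), (Hc x Ux); reflexivity. }
  unfold LieS, sum4C. rewrite !Q. apply injective_projections; simpl; ring.
Qed.

Lemma gdot_ext (g : Metric) x u u' v v' :
  (forall mu, (mu < 4)%nat -> u mu = u' mu) -> (forall mu, (mu < 4)%nat -> v mu = v' mu) ->
  gdot g x u v = gdot g x u' v'.
Proof. intros Hu Hv. unfold gdot, sum4C.
  rewrite (Hu 0%nat), (Hu 1%nat), (Hu 2%nat), (Hu 3%nat) by lia.
  rewrite (Hv 0%nat), (Hv 1%nat), (Hv 2%nat), (Hv 3%nat) by lia. reflexivity. Qed.

Lemma gdot_sym (g : Metric) x u v :
  (forall mu nu, (mu < 4)%nat -> (nu < 4)%nat -> g x mu nu = g x nu mu) ->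
  gdot g x u v = gdot g x v u.
Proof. intros Hs. unfold gdot, sum4C.
  rewrite (Hs 1%nat 0%nat), (Hs 2%nat 0%nat), (Hs 3%nat 0%nat), (Hs 2%nat 1%nat),
    (Hs 3%nat 1%nat), (Hs 3%nat 2%nat) by lia. ring. Qed.

Lemma gdot_conj (g : Metric) x u v :
  gdot g x (fun mu => Cconj (u mu)) (fun nu => Cconj (v nu)) = Cconj (gdot g x u v).
Proof. unfold gdot, sum4C. repeat rewrite Cplus_conj. repeat rewrite Cmult_conj.
  change (Cconj (RtoC ?a)) with (a, - 0)%R.
  repeat (rewrite Ropp_0). reflexivity. Qed.

Lemma gdot_scal_l (g : Metric) x c u v :
  gdot g x (fun mu => (c * u mu)%C) v = (c * gdot g x u v)%C.
Proof. unfold gdot, sum4C. ring. Qed.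
Lemma gdot_scal_r (g : Metric) x c u v :
  gdot g x u (fun mu => (c * v mu)%C) = (c * gdot g x u v)%C.
Proof. unfold gdot, sum4C. ring. Qed.

Lemma LieV_conj xi (m : CVField) x mu :
  LieV xi (conjV m) x mu = Cconj (LieV xi m x mu).
Proof. unfold LieV, conjV, sum4C.
  rewrite !pdC_conj. repeat rewrite Cplus_conj. repeat rewrite Cminus_conj.
  repeat rewrite Cmult_conj.
  change (Cconj (RtoC ?a)) with (a, - 0)%R.
  repeat (rewrite Ropp_0). reflexivity. Qed.

Lemma LieV_lift xi (l : VField) x mu :
  LieV xi (liftC l) x mu = RtoC (sum4 (fun r => xi x r * pd (fun y => l y mu) r x - l x r * pd (fun y => xi y mu) r x)).
Proof. unfold LieV, liftC, sum4C, sum4.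
  rewrite !pdC_RtoC. repeat rewrite RtoC_plus. repeat rewrite RtoC_minus. repeat rewrite RtoC_mult. reflexivity. Qed.

Definition rdot (g : Metric) x (u v : nat -> R) : R :=
  sum4 (fun mu => sum4 (fun nu => g x mu nu * u mu * v nu)).

Lemma gdot_pairs (g : Metric) x ur ui vr vi :
  gdot g x (fun mu => (ur mu, ui mu)) (fun nu => (vr nu, vi nu)) =
  (rdot g x ur vr - rdot g x ui vi, rdot g x ur vi + rdot g x ui vr)%R.
Proof. unfold gdot, rdot, sum4C, sum4. apply injective_projections; simpl; ring. Qed.

Definition gv (g : Metric) x (u : nat -> R) (nu : nat) : R := sum4 (fun k => u k * g x k nu).

Definition Emat4 (l n a b : nat -> R) (k i : nat) : R :=
  match i with 0 => l k | 1 => n k | 2 => a k | _ => b k end.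
Definition Kmat4 (g : Metric) x (l n a b : nat -> R) (i k : nat) : R :=
  match i with 0 => gv g x n k | 1 => gv g x l k | 2 => -2 * gv g x a k | _ => -2 * gv g x b k end.

Lemma gv_rdot g x u w : sum4 (fun k => gv g x u k * w k) = rdot g x u w.
Proof. unfold gv, rdot, sum4. ring. Qed.
Lemma gv_rdot2 g x u w : sum4 (fun k => -2 * gv g x u k * w k) = -2 * rdot g x u w.
Proof. unfold gv, rdot, sum4. ring. Qed.

Lemma completeness_real (g : Metric) x (l n a b : nat -> R) :
  rdot g x n l = 1 -> rdot g x n n = 0 -> rdot g x n a = 0 -> rdot g x n b = 0 ->
  rdot g x l l = 0 -> rdot g x l n = 1 -> rdot g x l a = 0 -> rdot g x l b = 0 ->
  rdot g x a l = 0 -> rdot g x a n = 0 -> rdot g x a a = - / 2 -> rdot g x a b = 0 ->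
  rdot g x b l = 0 -> rdot g x b n = 0 -> rdot g x b a = 0 -> rdot g x b b = - / 2 ->
  forall k mu, (k < 4)%nat -> (mu < 4)%nat ->
  l k * gv g x n mu + n k * gv g x l mu + a k * (-2 * gv g x a mu) + b k * (-2 * gv g x b mu)
  = delta k mu.
Proof.
  intros H1 H2 H3 H4 H5 H6 H7 H8 H9 H10 H11 H12 H13 H14 H15 H16 k mu Hk Hmu.
  assert (Hp : forall i j, (i < 4)%nat -> (j < 4)%nat ->
     sum4 (fun k => Kmat4 g x l n a b i k * Emat4 l n a b k j) = delta i j).
  { intros i j Hi Hj.
    destruct i as [|[|[|[|i]]]]; try lia; destruct j as [|[|[|[|j]]]]; try lia;
    cbv beta iota delta [Kmat4 Emat4 delta Nat.eqb];
    (rewrite gv_rdot || rewrite gv_rdot2);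
    ((rewrite H1 || rewrite H2 || rewrite H3 || rewrite H4 || rewrite H5 || rewrite H6 || rewrite H7
     || rewrite H8 || rewrite H9 || rewrite H10 || rewrite H11 || rewrite H12 || rewrite H13
     || rewrite H14 || rewrite H15 || rewrite H16)); field. }
  rewrite <- (LRInv.lr_std (Kmat4 g x l n a b) (Emat4 l n a b) Hp k mu Hk Hmu).
  unfold sum4, Emat4, Kmat4. ring.
Qed.

Definition gvC (g : Metric) x (u : nat -> C) (nu : nat) : C :=
  sum4C (fun k => (u k * RtoC (g x k nu))%C).

Definition eC (l n a b : nat -> R) (i : nat) : nat -> C :=
  match i with 0 => fun k => (l k, 0) | 1 => fun k => (n k, 0)
  | 2 => fun k => (a k, b k) | _ => fun k => (a k, - b k) end.
Definition fC (g : Metric) x (l n a b : nat -> R) (i : nat) (mu : nat) : C :=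
  match i with 0 => gvC g x (eC l n a b 1) mu | 1 => gvC g x (eC l n a b 0) mu
  | 2 => (- gvC g x (eC l n a b 3) mu)%C | _ => (- gvC g x (eC l n a b 2) mu)%C end.

Lemma completeness_C (g : Metric) x (l n a b : nat -> R) :
  (forall k mu, (k < 4)%nat -> (mu < 4)%nat ->
    l k * gv g x n mu + n k * gv g x l mu + a k * (-2 * gv g x a mu) + b k * (-2 * gv g x b mu)
    = delta k mu) ->
  forall k mu, (k < 4)%nat -> (mu < 4)%nat ->
  sum4C (fun i => (eC l n a b i k * fC g x l n a b i mu)%C) = RtoC (delta k mu).
Proof.
  intros H k mu Hk Hmu. rewrite <- (H k mu Hk Hmu).
  unfold sum4C, fC, eC, gvC, gv, sum4C, sum4.
  apply injective_projections; simpl; ring.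
Qed.

Lemma expand_vec (e f : nat -> nat -> C) :
  (forall k mu, (k < 4)%nat -> (mu < 4)%nat -> sum4C (fun i => (e i k * f i mu)%C) = RtoC (delta k mu)) ->
  forall (w : nat -> C) k, (k < 4)%nat ->
  w k = sum4C (fun i => (e i k * sum4C (fun mu => f i mu * w mu))%C).
Proof.
  intros H w k Hk.
  transitivity (sum4C (fun mu => (sum4C (fun i => (e i k * f i mu)%C) * w mu)%C)).
  - rewrite (sum4C_ext _ (fun mu => (RtoC (delta k mu) * w mu)%C)).
    2:{ intros mu Hmu. rewrite H; auto. }
    unfold sum4C, delta.
    destruct k as [|[|[|[|k]]]]; try lia; cbv [Nat.eqb];
    change (RtoC R1) with (RtoC 1); change (RtoC R0) with (RtoC 0); ring.
  - unfold sum4C. ring.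
Qed.

Lemma expand_form (e f : nat -> nat -> C) (H : nat -> nat -> C) :
  (forall k mu, (k < 4)%nat -> (mu < 4)%nat -> sum4C (fun i => (e i k * f i mu)%C) = RtoC (delta k mu)) ->
  (forall i j, (i < 4)%nat -> (j < 4)%nat ->
     sum4C (fun k => sum4C (fun q => (H k q * e i k * e j q)%C)) = 0%C) ->
  forall mu nu, (mu < 4)%nat -> (nu < 4)%nat -> H mu nu = 0%C.
Proof.
  intros Hd Hz mu nu Hmu Hnu.
  transitivity (sum4C (fun k => sum4C (fun q =>
     (sum4C (fun i => (e i k * f i mu)%C) * sum4C (fun i => (e i q * f i nu)%C) * H k q)%C))).
  - rewrite (sum4C_ext _ (fun k => sum4C (fun q =>
       (RtoC (delta k mu) * RtoC (delta q nu) * H k q)%C))).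
    2:{ intros k Hk. apply sum4C_ext. intros q Hq. rewrite !Hd; auto. }
    unfold sum4C, delta.
    destruct mu as [|[|[|[|mu]]]]; try lia; destruct nu as [|[|[|[|nu]]]]; try lia; cbv [Nat.eqb];
    change (RtoC R1) with (RtoC 1); change (RtoC R0) with (RtoC 0); ring.
  - transitivity (sum4C (fun i => sum4C (fun j => (f i mu * f j nu *
        sum4C (fun k => sum4C (fun q => (H k q * e i k * e j q)%C)))%C))).
    + unfold sum4C. ring.
    + rewrite (sum4C_ext _ (fun i => sum4C (fun j => 0%C))).
      * unfold sum4C. ring.
      * intros i Hi. apply sum4C_ext. intros j Hj. rewrite Hz; auto. ring.
Qed.

Lemma rdot_zero_l g x v : rdot g x (fun _ => 0) v = 0.
Proof. unfold rdot, sum4. ring. Qed.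
Lemma rdot_zero_r g x v : rdot g x v (fun _ => 0) = 0.
Proof. unfold rdot, sum4. ring. Qed.
Lemma rdot_opp_r g x u v : rdot g x u (fun k => - v k) = - rdot g x u v.
Proof. unfold rdot, sum4. ring. Qed.
Lemma rdot_sym (g : Metric) x u v :
  (forall mu nu, (mu < 4)%nat -> (nu < 4)%nat -> g x mu nu = g x nu mu) ->
  rdot g x u v = rdot g x v u.
Proof. intros Hs. unfold rdot, sum4.
  rewrite (Hs 1%nat 0%nat), (Hs 2%nat 0%nat), (Hs 3%nat 0%nat), (Hs 2%nat 1%nat),
    (Hs 3%nat 1%nat), (Hs 3%nat 2%nat) by lia. ring. Qed.

Lemma mpair (m : CVField) x : forall k, m x k = (Re (m x k), Im (m x k)).
Proof. intros k. destruct (m x k); reflexivity. Qed.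

Lemma pair_eq (a b c d : R) : (a, b) = (c, d) -> a = c /\ b = d.
Proof. intros H; inversion H; auto. Qed.

Lemma sum4C_unfold (f : nat -> C) : sum4C f = (f 0%nat + f 1%nat + f 2%nat + f 3%nat)%C.
Proof. reflexivity. Qed.
Lemma gvC_gdot g x u w : sum4C (fun mu => (gvC g x u mu * w mu)%C) = gdot g x u w.
Proof. unfold gvC, gdot, sum4C. ring. Qed.
Lemma gvC_gdot_neg g x u w : sum4C (fun mu => (- gvC g x u mu * w mu)%C) = (- gdot g x u w)%C.
Proof. unfold gvC, gdot, sum4C. ring. Qed.

Section Frame.
Variables (U : Point -> Prop) (g : Metric) (l n : VField) (m : CVField) (x : Point).
Hypothesis Hs : forall mu nu, (mu < 4)%nat -> (nu < 4)%nat -> g x mu nu = g x nu mu.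
Hypothesis HT : null_tetrad U g l n m.
Hypothesis Ux : U x.

Let av := fun k => Re (m x k).
Let bv := fun k => Im (m x k).

Lemma gram_real :
  rdot g x (n x) (l x) = 1 /\ rdot g x (n x) (n x) = 0 /\ rdot g x (n x) av = 0 /\ rdot g x (n x) bv = 0 /\
  rdot g x (l x) (l x) = 0 /\ rdot g x (l x) (n x) = 1 /\ rdot g x (l x) av = 0 /\ rdot g x (l x) bv = 0 /\
  rdot g x av (l x) = 0 /\ rdot g x av (n x) = 0 /\ rdot g x av av = - / 2 /\ rdot g x av bv = 0 /\
  rdot g x bv (l x) = 0 /\ rdot g x bv (n x) = 0 /\ rdot g x bv av = 0 /\ rdot g x bv bv = - / 2.
Proof.
  destruct (HT x Ux) as [LL [NN [MM [BB [LN [MB [LM [LB [NM NB]]]]]]]]].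
  assert (Em : gdot g x (m x) = gdot g x (fun k => (av k, bv k))).
  { extensionality w. apply gdot_ext; intros; auto. apply mpair. }
  assert (Em2 : forall u, gdot g x u (m x) = gdot g x u (fun k => (av k, bv k))).
  { intros u. apply gdot_ext; intros; auto. apply mpair. }
  cbv zeta in LL, NN, MM, BB, LN, MB, LM, LB, NM, NB.
  change (liftC l x) with (fun k => (l x k, 0)) in *.
  change (liftC n x) with (fun k => (n x k, 0)) in *.
  change (conjV m x) with (fun k => (av k, - bv k)) in *.
  rewrite Em, Em2 in MM. rewrite Em in MB. rewrite Em2 in LM, NM.
  rewrite !gdot_pairs in *.
  repeat rewrite rdot_zero_l in *.
  repeat rewrite rdot_zero_r in *.
  repeat rewrite rdot_opp_r in *.
  apply pair_eq in LL, NN, MM, MB, LM, LN, NM, NB, LB.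
  rewrite (rdot_sym g x bv av Hs) in *.
  rewrite (rdot_sym g x (n x) (l x) Hs).
  rewrite (rdot_sym g x av (l x) Hs), (rdot_sym g x bv (l x) Hs), (rdot_sym g x av (n x) Hs),
    (rdot_sym g x bv (n x) Hs).
  destruct LL, NN, MM, MB, LM, LN, NM, NB, LB.
  repeat split; lra.
Qed.

Lemma frame_complete : forall k mu, (k < 4)%nat -> (mu < 4)%nat ->
  sum4C (fun i => (eC (l x) (n x) av bv i k * fC g x (l x) (n x) av bv i mu)%C) = RtoC (delta k mu).
Proof.
  destruct gram_real as [H1 [H2 [H3 [H4 [H5 [H6 [H7 [H8 [H9 [H10 [H11 [H12 [H13 [H14 [H15 H16]]]]]]]]]]]]]]].
  apply completeness_C. apply completeness_real; assumption.
Qed.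

Lemma frame_expand (w : nat -> C) k : (k < 4)%nat ->
  w k = (RtoC (l x k) * gdot g x (liftC n x) w + RtoC (n x k) * gdot g x (liftC l x) w
        - m x k * gdot g x (conjV m x) w - Cconj (m x k) * gdot g x (m x) w)%C.
Proof.
  intros Hk. rewrite (expand_vec _ _ frame_complete w k Hk).
  rewrite sum4C_unfold. cbv beta. cbv [eC fC].
  rewrite !gvC_gdot, !gvC_gdot_neg.
  rewrite (gdot_ext g x (fun k0 => (av k0, bv k0)) (m x) w w).
  2:{ intros; symmetry; apply mpair. }
  2:{ auto. }
  rewrite (mpair m x k).
  change (fun k0 => (l x k0, 0)) with (liftC l x).
  change (fun k0 => (n x k0, 0)) with (liftC n x).
  change (fun k0 => (av k0, - bv k0)) with (conjV m x).
  change (l x k, 0) with (RtoC (l x k)). change (n x k, 0) with (RtoC (n x k)).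
  change (av k, - bv k) with (Cconj (av k, bv k)).
  unfold av, bv. ring.
Qed.

Lemma frame_form (H : nat -> nat -> C) :
  (forall i j, (i < 4)%nat -> (j < 4)%nat ->
     sum4C (fun k => sum4C (fun q => (H k q * eC (l x) (n x) av bv i k * eC (l x) (n x) av bv j q)%C)) = 0%C) ->
  forall mu nu, (mu < 4)%nat -> (nu < 4)%nat -> H mu nu = 0%C.
Proof. intros Hz. apply (expand_form _ _ H frame_complete Hz). Qed.

End Frame.

Definition TF (l n : VField) (m : CVField) (i : nat) : CVField :=
  match i with 0 => liftC l | 1 => liftC n | 2 => m | _ => conjV m end.

Lemma eC_TF l n (m : CVField) x i k :
  eC (l x) (n x) (fun k0 => Re (m x k0)) (fun k0 => Im (m x k0)) i k = TF l n m i x k.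
Proof. destruct i as [|[|[|i]]]; simpl; try reflexivity. symmetry; apply mpair. Qed.

Lemma key_pair (U : Point -> Prop) g xi (uF vF : CVField) x c :
  open4 U -> U x ->
  (forall mu nu, (mu < 4)%nat -> (nu < 4)%nat -> has_pd (fun y => g y mu nu) x) ->
  (forall mu, (mu < 4)%nat -> goodC (fun y => uF y mu) x) ->
  (forall mu, (mu < 4)%nat -> goodC (fun y => vF y mu) x) ->
  (forall y, U y -> gdot g y (uF y) (vF y) = c) ->
  (sum4C (fun mu => sum4C (fun nu => RtoC (LieG xi g x mu nu) * uF x mu * vF x nu))
   + gdot g x (LieV xi uF x) (vF x) + gdot g x (uF x) (LieV xi vF x))%C = RtoC 0.
Proof. intros HO Ux Hg Hu Hv Hc. rewrite <- lie_gdot; auto.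
  apply (LieS_loc_const U xi _ c x HO Ux Hc). Qed.

Lemma Cconj_RtoC r : Cconj (RtoC r) = RtoC r.
Proof. unfold Cconj, RtoC; simpl. rewrite Ropp_0. reflexivity. Qed.

Lemma C_double (X Y : C) : (X + X)%C = Y -> X = (RtoC (/ 2) * Y)%C.
Proof. intros H. rewrite <- H. destruct X as [a b].
  apply injective_projections; simpl; field. Qed.

Lemma Cplus_zero_l (X Y : C) : (X + Y)%C = RtoC 0 -> X = (- Y)%C.
Proof. intros H. transitivity ((X + Y) - Y)%C. ring. rewrite H. ring. Qed.

Lemma Csub_zero (X Y : C) : (X - Y)%C = RtoC 0 -> X = Y.
Proof. intros H. transitivity ((X - Y) + Y)%C. ring. rewrite H. ring. Qed.

Lemma TF_good (U : Point -> Prop) xi g l n m x : U x -> regular_data U xi g l n m ->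
  forall i mu, (mu < 4)%nat -> goodC (fun y => TF l n m i y mu) x.
Proof. intros Ux Hr i mu Hmu. destruct (Hr x Ux mu Hmu) as [_ [Hl [Hn [Hmr [Hmi _]]]]].
  destruct i as [|[|[|i]]]; simpl.
  - apply gC_RtoC; auto.
  - apply gC_RtoC; auto.
  - split; auto.
  - apply gC_conj. split; auto. Qed.

Lemma TF_const (U : Point -> Prop) g l n m :
  symmetric_metric U g -> null_tetrad U g l n m ->
  forall i j, (i < 4)%nat -> (j < 4)%nat -> exists c, forall y, U y ->
    gdot g y (TF l n m i y) (TF l n m j y) = c.
Proof. intros Hs HT i j Hi Hj.
  assert (S : forall y, U y -> forall u v, gdot g y u v = gdot g y v u).
  { intros y Uy u v. apply gdot_sym. apply Hs; auto. }
  destruct i as [|[|[|[|i]]]]; try lia; destruct j as [|[|[|[|j]]]]; try lia; simpl;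
  [ exists (RtoC 0) | exists (RtoC 1) | exists (RtoC 0) | exists (RtoC 0)
  | exists (RtoC 1) | exists (RtoC 0) | exists (RtoC 0) | exists (RtoC 0)
  | exists (RtoC 0) | exists (RtoC 0) | exists (RtoC 0) | exists (RtoC (-1))
  | exists (RtoC 0) | exists (RtoC 0) | exists (RtoC (-1)) | exists (RtoC 0) ];
  intros y Uy; destruct (HT y Uy) as [LL [NN [MM [BB [LN [MB [LM [LB [NM NB]]]]]]]]];
  cbv zeta in *;
  (assumption || (rewrite S; assumption)).
Qed.

Lemma Hsplit (G L : nat -> nat -> R) (phi : R) (u v : nat -> C) :
  sum4C (fun k => sum4C (fun q => (RtoC (L k q - phi * G k q) * u k * v q)%C)) =
  (sum4C (fun k => sum4C (fun q => (RtoC (L k q) * u k * v q)%C))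
   - RtoC phi * sum4C (fun k => sum4C (fun q => (RtoC (G k q) * u k * v q)%C)))%C.
Proof. unfold sum4C. repeat rewrite RtoC_minus. repeat rewrite RtoC_mult. ring. Qed.

Lemma forward (U : Point -> Prop) (g : Metric) (xi : VField)
  (phi : Point -> R) (l n : VField) (m : CVField) :
  open4 U -> symmetric_metric U g -> regular_data U xi g l n m -> null_tetrad U g l n m ->
  lie_recurrent U xi phi l n m -> conformal_killing U g xi phi.
Proof.
  intros HO Hsym Hreg HT Hrec x Ux mu nu Hmu Hnu.
  assert (Hs : forall mu nu, (mu < 4)%nat -> (nu < 4)%nat -> g x mu nu = g x nu mu) by (apply Hsym; auto).
  assert (Hg : forall mu nu, (mu < 4)%nat -> (nu < 4)%nat -> has_pd (fun y => g y mu nu) x).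
  { intros a b Ha Hb. destruct (Hreg x Ux a Ha) as [_ [_ [_ [_ [_ H]]]]]. auto. }
  set (c := RtoC (- / 2 * phi x)).
  assert (Hr : forall i k, (k < 4)%nat -> LieV xi (TF l n m i) x k = (c * TF l n m i x k)%C).
  { intros i k Hk. destruct (Hrec x Ux k Hk) as [R1 [R2 R3]].
    destruct i as [|[|[|i]]]; simpl.
    - rewrite R1. unfold c. rewrite RtoC_mult. reflexivity.
    - rewrite R2. unfold c. rewrite RtoC_mult. reflexivity.
    - exact R3.
    - rewrite LieV_conj. unfold conjV. rewrite R3. rewrite Cmult_conj. unfold c. rewrite Cconj_RtoC. reflexivity. }
  assert (HZ : RtoC (LieG xi g x mu nu - phi x * g x mu nu) = RtoC 0).
  { apply (frame_form U g l n m x Hs HT Ux (fun a b => RtoC (LieG xi g x a b - phi x * g x a b))); auto.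
    intros i j Hi Hj.
    rewrite (sum4C_ext _ (fun k => sum4C (fun q =>
       (RtoC (LieG xi g x k q - phi x * g x k q) * TF l n m i x k * TF l n m j x q)%C))).
    2:{ intros k _. apply sum4C_ext. intros q _. rewrite !eC_TF. reflexivity. }
    rewrite Hsplit. fold (gdot g x (TF l n m i x) (TF l n m j x)).
    destruct (TF_const U g l n m Hsym HT i j Hi Hj) as [cc Hcc].
    pose proof (key_pair U g xi (TF l n m i) (TF l n m j) x cc HO Ux Hg
       (TF_good U xi g l n m x Ux Hreg i) (TF_good U xi g l n m x Ux Hreg j) Hcc) as K.
    rewrite (gdot_ext g x (LieV xi (TF l n m i) x) (fun k => c * TF l n m i x k)%C
       (TF l n m j x) (TF l n m j x)) in K by (auto; intros; apply Hr; auto).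
    rewrite (gdot_ext g x (TF l n m i x) (TF l n m i x) (LieV xi (TF l n m j) x)
       (fun k => c * TF l n m j x k)%C) in K by (auto; intros; apply Hr; auto).
    rewrite gdot_scal_l, gdot_scal_r in K.
    set (A := sum4C (fun mu => sum4C (fun nu => (RtoC (LieG xi g x mu nu) * TF l n m i x mu * TF l n m j x nu)%C))) in *.
    set (G := gdot g x (TF l n m i x) (TF l n m j x)) in *.
    assert (Hc2 : (c + c + RtoC (phi x))%C = RtoC 0).
    { unfold c. rewrite <- !RtoC_plus. f_equal. field. }
    transitivity (((A + c * G) + c * G) - (c + c + RtoC (phi x)) * G)%C.
    ring. rewrite K, Hc2. ring. }
  apply (f_equal fst) in HZ. simpl in HZ. lra.
Qed.

Lemma sum_scal (p : R) (G : nat -> nat -> R) (u v : nat -> C) :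
  sum4C (fun k => sum4C (fun q => (RtoC (p * G k q) * u k * v q)%C)) =
  (RtoC p * sum4C (fun k => sum4C (fun q => (RtoC (G k q) * u k * v q)%C)))%C.
Proof. unfold sum4C. repeat rewrite RtoC_mult. ring. Qed.

Lemma converse (U : Point -> Prop) (g : Metric) (xi : VField)
  (phi : Point -> R) (l n : VField) (m : CVField) :
  open4 U -> symmetric_metric U g -> regular_data U xi g l n m -> null_tetrad U g l n m ->
  preferred_tetrad U g xi l n m ->
  conformal_killing U g xi phi -> lie_recurrent U xi phi l n m.
Proof.
  intros HO Hsym Hreg HT [Hpd Hpg] Hck x Ux.
  assert (Hs : forall mu nu, (mu < 4)%nat -> (nu < 4)%nat -> g x mu nu = g x nu mu) by (apply Hsym; auto).
  assert (Hg : forall mu nu, (mu < 4)%nat -> (nu < 4)%nat -> has_pd (fun y => g y mu nu) x).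
  { intros a b Ha Hb. destruct (Hreg x Ux a Ha) as [_ [_ [_ [_ [_ H]]]]]. auto. }
  assert (E : forall i j, (i < 4)%nat -> (j < 4)%nat ->
     (gdot g x (LieV xi (TF l n m i) x) (TF l n m j x) + gdot g x (TF l n m i x) (LieV xi (TF l n m j) x))%C
     = (- RtoC (phi x) * gdot g x (TF l n m i x) (TF l n m j x))%C).
  { intros i j Hi Hj.
    destruct (TF_const U g l n m Hsym HT i j Hi Hj) as [cc Hcc].
    pose proof (key_pair U g xi (TF l n m i) (TF l n m j) x cc HO Ux Hg
       (TF_good U xi g l n m x Ux Hreg i) (TF_good U xi g l n m x Ux Hreg j) Hcc) as K.
    rewrite (sum4C_ext _ (fun k => sum4C (fun q => (RtoC (phi x * g x k q) * TF l n m i x k * TF l n m j x q)%C))) in K.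
    2:{ intros k Hk. apply sum4C_ext. intros q Hq. rewrite Hck; auto. }
    rewrite sum_scal in K. fold (gdot g x (TF l n m i x) (TF l n m j x)) in K.
    set (G := gdot g x (TF l n m i x) (TF l n m j x)) in *.
    transitivity ((RtoC (phi x) * G + (gdot g x (LieV xi (TF l n m i) x) (TF l n m j x)
        + gdot g x (TF l n m i x) (LieV xi (TF l n m j) x))) - RtoC (phi x) * G)%C.
    ring. rewrite Cplus_assoc, K. ring. }
  assert (S : forall u v, gdot g x u v = gdot g x v u) by (intros; apply gdot_sym; auto).
  destruct (HT x Ux) as [LL [NN [MM [BB [LN [MB [LM [LB [NM NB]]]]]]]]]. cbv zeta in *.
  pose proof (E 0%nat 0%nat ltac:(lia) ltac:(lia)) as E00.
  pose proof (E 0%nat 1%nat ltac:(lia) ltac:(lia)) as E01.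
  pose proof (E 1%nat 1%nat ltac:(lia) ltac:(lia)) as E11.
  pose proof (E 0%nat 3%nat ltac:(lia) ltac:(lia)) as E03.
  pose proof (E 1%nat 2%nat ltac:(lia) ltac:(lia)) as E12.
  pose proof (E 0%nat 2%nat ltac:(lia) ltac:(lia)) as E02.
  pose proof (E 2%nat 2%nat ltac:(lia) ltac:(lia)) as E22.
  pose proof (E 2%nat 3%nat ltac:(lia) ltac:(lia)) as E23.
  clear E. simpl TF in E00, E01, E11, E03, E12, E02, E22, E23.
  assert (GA : gdot g x (liftC l x) (LieV xi (liftC n) x) = gdot g x (liftC n x) (LieV xi (liftC l) x)).
  { pose proof (Hpg 2%Z 2%Z (fun _ => RtoC 1) x Ux) as H. unfold GHPLie in H. cbv beta in H.
    replace (IZR (2 + 2) / 4) with 1 in H by (simpl; field).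
    replace (IZR (2 - 2) / 4) with 0 in H by (simpl; field).
    apply Csub_zero.
    set (Ls := LieS xi (fun _ : Point => RtoC 1) x) in *.
    transitivity ((Ls + RtoC 1 * (gdot g x (liftC l x) (LieV xi (liftC n) x) - gdot g x (liftC n x) (LieV xi (liftC l) x)) * RtoC 1
      + RtoC 0 * (gdot g x (conjV m x) (LieV xi m x) - gdot g x (m x) (LieV xi (conjV m) x)) * RtoC 1) - Ls)%C.
    ring. rewrite H. ring. }
  assert (GB : gdot g x (conjV m x) (LieV xi m x) = gdot g x (m x) (LieV xi (conjV m) x)).
  { pose proof (Hpg 2%Z (-2)%Z (fun _ => RtoC 1) x Ux) as H. unfold GHPLie in H. cbv beta in H.
    replace (IZR (2 + -2) / 4) with 0 in H by (simpl; field).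
    replace (IZR (2 - -2) / 4) with 1 in H by (simpl; field).
    apply Csub_zero.
    set (Ls := LieS xi (fun _ : Point => RtoC 1) x) in *.
    transitivity ((Ls + RtoC 0 * (gdot g x (liftC l x) (LieV xi (liftC n) x) - gdot g x (liftC n x) (LieV xi (liftC l) x)) * RtoC 1
      + RtoC 1 * (gdot g x (conjV m x) (LieV xi m x) - gdot g x (m x) (LieV xi (conjV m) x)) * RtoC 1) - Ls)%C.
    ring. rewrite H. ring. }
  set (L0 := LieV xi (liftC l) x) in *.
  set (L1 := LieV xi (liftC n) x) in *.
  set (L2 := LieV xi m x) in *.
  set (L3 := LieV xi (conjV m) x) in *.
  destruct (Hpd x Ux) as [P1 P2]. fold L0 L1 L2 L3 in P1, P2.
  rewrite LL in E00. rewrite LN in E01. rewrite NN in E11. rewrite LB in E03.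
  rewrite NM in E12. rewrite LM in E02. rewrite MM in E22. rewrite MB in E23.
  rewrite (S L0 (liftC l x)) in E00. apply C_double in E00.
  rewrite (S L0 (liftC n x)), GA in E01. apply C_double in E01.
  rewrite (S L1 (liftC n x)) in E11. apply C_double in E11.
  rewrite (S L0 (conjV m x)), <- P1 in E03. apply C_double in E03.
  rewrite (S L1 (m x)), <- P2 in E12. apply C_double in E12.
  rewrite (S L2 (m x)) in E22. apply C_double in E22.
  rewrite (S L2 (conjV m x)), GB in E23. apply C_double in E23.
  assert (L0r : forall k, Cconj (L0 k) = L0 k).
  { intros k. unfold L0. rewrite LieV_lift. apply Cconj_RtoC. }
  assert (L1r : forall k, Cconj (L1 k) = L1 k).
  { intros k. unfold L1. rewrite LieV_lift. apply Cconj_RtoC. }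
  assert (CJ0 : gdot g x (m x) L0 = Cconj (gdot g x (conjV m x) L0)).
  { rewrite <- gdot_conj. apply gdot_ext; intros k _.
    unfold conjV. rewrite Cconj_conj. reflexivity. rewrite L0r. reflexivity. }
  assert (CJ1 : gdot g x (conjV m x) L1 = Cconj (gdot g x (m x) L1)).
  { rewrite <- gdot_conj. apply gdot_ext; intros k _. reflexivity. rewrite L1r. reflexivity. }
  set (h := RtoC (/ 2)) in *. set (p := RtoC (phi x)) in *.
  assert (v_lL0 : gdot g x (liftC l x) L0 = RtoC 0) by (rewrite E00; ring).
  assert (v_bL0 : gdot g x (conjV m x) L0 = RtoC 0) by (rewrite E03; ring).
  assert (v_mL0 : gdot g x (m x) L0 = RtoC 0) by (rewrite CJ0, v_bL0; apply Cconj_RtoC).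
  assert (v_nL1 : gdot g x (liftC n x) L1 = RtoC 0) by (rewrite E11; ring).
  assert (v_mL1 : gdot g x (m x) L1 = RtoC 0) by (rewrite E12; ring).
  assert (v_bL1 : gdot g x (conjV m x) L1 = RtoC 0) by (rewrite CJ1, v_mL1; apply Cconj_RtoC).
  assert (v_nL2 : gdot g x (liftC n x) L2 = RtoC 0) by (rewrite <- P2; exact v_mL1).
  assert (v_lL2 : gdot g x (liftC l x) L2 = RtoC 0).
  { rewrite (S L0 (m x)), v_mL0 in E02.
    transitivity (RtoC 0 + gdot g x (liftC l x) L2)%C. ring.
    rewrite E02. ring. }
  assert (v_mL2 : gdot g x (m x) L2 = RtoC 0) by (rewrite E22; ring).
  assert (v_bL2 : gdot g x (conjV m x) L2 = (h * p)%C).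
  { rewrite GB, E23. replace (RtoC (-1)) with (- RtoC 1)%C by (apply injective_projections; simpl; ring). ring. }
  assert (Eh : RtoC (- / 2 * phi x) = (- h * p)%C).
  { rewrite RtoC_mult, RtoC_opp. reflexivity. }
  intros mu Hmu. split; [|split].
  - rewrite (frame_expand U g l n m x Hs HT Ux L0 mu Hmu).
    rewrite E01, v_lL0, v_bL0, v_mL0, RtoC_mult, Eh. fold p. ring.
  - rewrite (frame_expand U g l n m x Hs HT Ux L1 mu Hmu).
    rewrite v_nL1, GA, E01, v_bL1, v_mL1, RtoC_mult, Eh. fold p. ring.
  - rewrite (frame_expand U g l n m x Hs HT Ux L2 mu Hmu).
    rewrite v_nL2, v_lL2, v_bL2, v_mL2, Eh. ring.
Qed.


Theorem lemma13 (U : Point -> Prop) (g : Metric) (xi : VField)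
  (phi : Point -> R) (l n : VField) (m : CVField) :
  open4 U ->
  symmetric_metric U g ->
  regular_data U xi g l n m ->
  null_tetrad U g l n m ->
  preferred_tetrad U g xi l n m ->
  (lie_recurrent U xi phi l n m <-> conformal_killing U g xi phi).
Proof.
  intros HO Hsym Hreg HT HP. split.
  - apply forward; auto.
  - apply converse; auto.
Qed.
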